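(* Consider the two-good panel bundle model described in the context and suppose Assumptions 1–3 hold. Then for any $(x_s,x_t,z)$ and any $s\neq t$: (1) for each $j\in\mathcal C$: if $P_s(\{j\}\mid x_s,x_t,z)>P_t(\{j\}\mid x_s,x_t,z)$, then there exists $k\in\mathcal C$, $k\neq j$, with $\Delta_{s,t}\delta_j>\Delta_{s,t}\delta_k$; (2) for each $\ell\in\{A,B\}$, with $\ell_{-1}$ the other good: if $P_s(\{\ell,AB\}\mid x_s,x_t,z)>P_t(\{\ell,AB\}\mid x_s,x_t,z)$, then either $\Delta_{s,t}\delta_\ell>0$, or both $\Delta_{s,t}(\delta_\ell+\operatorname{sign}(\Gamma(z))\delta_{\ell_{-1}})>0$ and $|\Gamma(z)|>-\Delta_{s,t}\delta_\ell$ (or both alternatives hold); (3) if $P_s(\{AB\}\mid x_s,x_t,z)+P_t(\{O\}\mid x_s,x_t,z)>1$, then $\Gamma(z)>-\min\{\Delta_{s,t}\delta_A,\Delta_{s,t}\delta_B\}$ and $\Delta_{s,t}(\delta_A+\delta_B)>0$; and if $P_s(\{A\}\mid x_s,x_t,z)+P_t(\{B\}\mid x_s,x_t,z)>1$, then $\Gamma(z)<\min\{\Delta_{s,t}\delta_A,-\Delta_{s,t}\delta_B\}$ and $\Delta_{s,t}(\delta_A-\delta_B)>0$.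
   Context: Panel multinomial choice model with bundles: consumers $i$, periods $t=1,\dots,T$ with $T\ge 2$ fixed; two goods $A,B$ and choice set $\mathcal C=\{A,B,AB,O\}$ ($A$ = only good $A$, $B$ = only good $B$, $AB$ = both goods, $O$ = outside option). Utilities: $u_{iAt}=X_{iAt}'\beta_0+\alpha_{iA}+\epsilon_{iAt}$, $u_{iBt}=X_{iBt}'\beta_0+\alpha_{iB}+\epsilon_{iBt}$, $u_{iABt}=u_{iAt}+u_{iBt}+\Gamma_{it}$, $u_{iOt}=0$, with $X_{ijt}\in\mathbb R^{d_x}$ observed, $\alpha_{ij}\in\mathbb R$ unobserved time-invariant fixed effects, $\epsilon_{ijt}\in\mathbb R$ unobserved shocks, $\beta_0\in\mathbb R^{d_x}$ unknown. The observed choice $Y_{it}\in\mathcal C$ maximizes utility; ties occur with probability zero. $X_{it}=(X_{iAt},X_{iBt})$, $\alpha_i=(\alpha_{iA},\alpha_{iB})$, $\epsilon_{it}=(\epsilon_{iAt},\epsilon_{iBt})$. Assumption 1: $\Gamma_{it}=\Gamma(Z_i)$, $Z_i\in\mathbb R^{d_z}$ observed and time-invariant, $\Gamma$ possibly unknown. Assumption 2: at least one component of $X_{it}$ is not in $Z_i$ and has nonzero coefficient. Assumption 3: for all $s,t\le T$, $\epsilon_{is}\mid(X_{is},X_{it},Z_i,\alpha_i)$ and $\epsilon_{it}\mid(X_{is},X_{it},Z_i,\alpha_i)$ have the same distribution. Notation: $P_t(K\mid x_s,x_t,z)=\Pr(Y_{it}\in K\mid X_{is}=x_s,X_{it}=x_t,Z_i=z)$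 for $K\subset\mathcal C$. Given $X_{i\ell t}=x_{\ell t}$: $\delta_{\ell t}=x_{\ell t}'\beta_0$ for $\ell\in\{A,B\}$, $\delta_{ABt}=\delta_{At}+\delta_{Bt}$, $\delta_{Ot}=0$, and $\Delta_{s,t}\delta_j=\delta_{js}-\delta_{jt}$. $\operatorname{sign}(x)=\mathbb 1\{x>0\}-\mathbb 1\{x<0\}$. *)

(* Defs.v *)
From HB Require Import structures.
From mathcomp Require Import all_boot all_order all_algebra.
From mathcomp Require Import all_classical all_reals all_analysis.
Set Implicit Arguments. Unset Strict Implicit. Unset Printing Implicit Defensive.
Import Order.TTheory GRing.Theory Num.Theory.
Local Open Scope ring_scope.

Inductive alt := altA | altB | altAB | altO.

Definition other (l : alt) : alt :=
  match l with altA => altB | altB => altA | x => x end.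

Definition dotp (R : ringType) (n : nat) (u v : 'rV[R]_n) : R :=
  \sum_(i < n) u 0 i * v 0 i.

(* Mean utilities delta_{jt} given covariates x = (x_A, x_B) of a period. *)
Definition delta (R : ringType) (n : nat) (beta : 'rV[R]_n)
    (x : 'rV[R]_n * 'rV[R]_n) (j : alt) : R :=
  match j with
  | altA => dotp x.1 beta
  | altB => dotp x.2 beta
  | altAB => dotp x.1 beta + dotp x.2 beta
  | altO => 0
  end.

Definition utility (R : ringType) (n : nat) (beta : 'rV[R]_n)
    (x : 'rV[R]_n * 'rV[R]_n) (g : R) (a e : R * R) (j : alt) : R :=
  match j with
  | altA => delta beta x altA + a.1 + e.1
  | altB => delta beta x altB + a.2 + e.2
  | altAB => (delta beta x altA + a.1 + e.1) + (delta beta x altB + a.2 + e.2) + g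
  | altO => 0
  end.

(* Main.v *)
Require Import Defs.
From HB Require Import structures.
From mathcomp Require Import all_boot all_order all_algebra.
From mathcomp Require Import all_classical all_reals all_analysis.
Import Order.TTheory GRing.Theory Num.Theory.
Local Open Scope ring_scope.
Local Open Scope classical_set_scope.
From mathcomp Require Import lra.

Lemma mexists_alt d (X : measurableType d) (S : alt -> set X) :
  (forall j, measurable (S j)) -> measurable [set x | exists j, S j x].
Proof.
move=> mS.
have -> : [set x | exists j, S j x] = S altA `|` S altB `|` S altAB `|` S altO.
  apply/seteqP; split => x /=.
    by move=> [[]] h; [left;left;left|left;left;right|left;right|right].
  by move=> [[[h|h]|h]|h]; eexists; exact h.
by repeat apply: measurableU.
Qed.
Lemma mforall_alt d (X : measurableType d) (S : alt -> set X) :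
  (forall j, measurable (S j)) -> measurable [set x | forall j, S j x].
Proof.
move=> mS.
have -> : [set x | forall j, S j x] = S altA `&` S altB `&` S altAB `&` S altO.
  apply/seteqP; split => x /=.
    by move=> h; split; [split; [split|]|]; apply h.
  by move=> [[[? ?] ?] ?] [].
by repeat apply: measurableI.
Qed.
Lemma mprop_and d (X : measurableType d) (Q : Prop) (S : set X) :
  measurable S -> measurable [set x | Q /\ S x].
Proof.
move=> mS; case: (pselect Q) => q.
  by have -> : [set x | Q /\ S x] = S by apply/seteqP; split => x /= //; case.
by have -> : [set x | Q /\ S x] = set0 by apply/seteqP; split => x /= //; case.
Qed.
Lemma mle d (X : measurableType d) (R : realType) (f g : X -> R) :
  measurable_fun setT f -> measurable_fun setT g -> measurable [set x | f x <= g x].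
Proof.
move=> mf mg; have h := measurable_realfun.measurable_fun_ler mf mg measurableT.
have mt : measurable [set true] by [].
by have := h _ mt; rewrite setTI.
Qed.
Lemma meq d (X : measurableType d) (R : realType) (f g : X -> R) :
  measurable_fun setT f -> measurable_fun setT g -> measurable [set x | f x = g x].
Proof.
move=> mf mg.
have -> : [set x | f x = g x] = [set x | f x <= g x] `&` [set x | g x <= f x].
  apply/seteqP; split => x /=; first by move=> ->.
  by case=> h1 h2; apply/le_anti; rewrite h1 h2.
by apply: measurableI; apply: mle.
Qed.
Lemma mutil (R : realType) n (beta : 'rV[R]_n) x g j :
  measurable_fun setT (fun ae : (R*R)*(R*R) => utility beta x g ae.1 ae.2 j).
Proof.
have m11 : measurable_fun setT (fun ae : (R*R)*(R*R) => ae.1.1).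
  exact: (measurableT_comp measurable_fst measurable_fst).
have m12 : measurable_fun setT (fun ae : (R*R)*(R*R) => ae.1.2).
  exact: (measurableT_comp measurable_snd measurable_fst).
have m21 : measurable_fun setT (fun ae : (R*R)*(R*R) => ae.2.1).
  exact: (measurableT_comp measurable_fst measurable_snd).
have m22 : measurable_fun setT (fun ae : (R*R)*(R*R) => ae.2.2).
  exact: (measurableT_comp measurable_snd measurable_snd).
have mD := fun (f g : (R*R)*(R*R) -> R) (hf : measurable_fun setT f) (hg : measurable_fun setT g) =>
  @measurable_realfun.measurable_funD _ _ R setT f g hf hg.
case: j => /=.
- exact (mD _ _ (mD _ _ (measurable_cst _) m11) m21).
- exact: (mD _ _ (mD _ _ (measurable_cst _) m12) m22).
- exact: (mD _ _ (mD _ _ (mD _ _ (mD _ _ (measurable_cst _) m11) m21) (mD _ _ (mD _ _ (measurable_cst _) m12) m22)) (measurable_cst _)).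
- exact: measurable_cst.
Qed.

Lemma mE d (X : measurableType d) (Y : X -> alt) (K : alt -> Prop) :
  (forall j, measurable [set w | Y w = j]) -> measurable [set w | K (Y w)].
Proof.
move=> mY; have -> : [set w | K (Y w)] = [set w | exists j, K j /\ Y w = j].
  by apply/seteqP; split=> w /=; [exists (Y w) | move=> [j [? ->]]].
by apply: mexists_alt => j; apply: mprop_and; exact: mY.
Qed.

Lemma key (R : realType) d (Omega : measurableType d) (P : probability Omega R)
  (alpha es et : Omega -> R * R) (Ys Yt : Omega -> alt)
  (us ut : R * R -> R * R -> alt -> R)
  (mps : measurable_fun setT (fun w => (alpha w, es w)))
  (mpt : measurable_fun setT (fun w => (alpha w, et w)))
  (mut : forall j, measurable_fun setT (fun ae : (R*R)*(R*R) => ut ae.1 ae.2 j))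
  (mYs : forall j, measurable [set w | Ys w = j])
  (mYt : forall j, measurable [set w | Yt w = j])
  (hYs : forall w k, us (alpha w) (es w) k <= us (alpha w) (es w) (Ys w))
  (hYt : forall w k, ut (alpha w) (et w) k <= ut (alpha w) (et w) (Yt w))
  (hties : P [set w | exists j k, j <> k /\
        (forall m, ut (alpha w) (et w) m <= ut (alpha w) (et w) j) /\
        ut (alpha w) (et w) k = ut (alpha w) (et w) j] = 0%E)
  (hA3 : forall A : set ((R * R) * (R * R)), measurable A ->
      P ((fun w => (alpha w, es w)) @^-1` A)
      = P ((fun w => (alpha w, et w)) @^-1` A))
  (K1 K2 : alt -> Prop)
  (himp : forall a e, (exists j, K1 j /\ forall m, us a e m <= us a e j) ->
                      exists j, K2 j /\ forall m, ut a e m <= ut a e j) :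
  (P [set w | K1 (Ys w)] <= P [set w | K2 (Yt w)])%E.
Proof.
set S := [set ae : (R*R)*(R*R) | exists j, K2 j /\ forall m, ut ae.1 ae.2 m <= ut ae.1 ae.2 j].
have mS : measurable S.
  apply: mexists_alt => j; apply: mprop_and; apply: mforall_alt => m; apply: mle; exact: mut.
have mpre : forall (f : Omega -> (R*R)*(R*R)), measurable_fun setT f -> measurable (f @^-1` S).
  by move=> f mf; have := mf measurableT _ mS; rewrite setTI.
set Ti := [set w | exists j k, j <> k /\
        (forall m, ut (alpha w) (et w) m <= ut (alpha w) (et w) j) /\
        ut (alpha w) (et w) k = ut (alpha w) (et w) j].
have mTi : measurable Ti.
  apply: mexists_alt => j; apply: mexists_alt => k; apply: mprop_and.
  apply: measurableI.
    apply: mforall_alt => m; apply: mle.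
      exact: (measurableT_comp (mut m) mpt).
    exact: (measurableT_comp (mut j) mpt).
  apply: meq.
    exact: (measurableT_comp (mut k) mpt).
  exact: (measurableT_comp (mut j) mpt).
have mEs : measurable [set w | K1 (Ys w)] by exact: mE.
have mEt : measurable [set w | K2 (Yt w)] by exact: mE.
apply: (@le_trans _ _ (P ((fun w => (alpha w, es w)) @^-1` S))).
  apply: le_measure; rewrite ?inE //; first exact: mpre.
  move=> w /= hK; apply: himp; exists (Ys w); split => //; exact: hYs.
rewrite hA3 //.
apply: (@le_trans _ _ (P ([set w | K2 (Yt w)] `|` Ti))).
  apply: le_measure; rewrite ?inE //; first exact: mpre.
    exact: measurableU.
  move=> w /= [j [hK hj]].
  case: (pselect (K2 (Yt w))) => h; first by left.
  right; exists (Yt w), j; split; first by move=> e; apply: h; rewrite e.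
  split; first exact: hYt.
  by apply/le_anti; rewrite hj hYt.
apply: (le_trans (measureU2 _ _ _)) => //.
rewrite [X in (_ + X)%E](_ : _ = 0%E) ?adde0 //; exact: hties.

Qed.

Lemma pick_max (R : realDomainType) (f : alt -> R) (K : alt -> Prop) :
  (forall m, ~ K m -> exists j, K j /\ f m <= f j) -> exists j, K j /\ forall m, f m <= f j.
Proof.
move=> h.
have step : forall j k, exists l, f j <= f l /\ f k <= f l.
  move=> j k; have [hjk|hjk] := leP (f j) (f k).
    by exists k; split.
  by exists j; split => //; apply: ltW.
have [l1 [a1 b1]] := step altA altB.
have [l2 [a2 b2]] := step l1 altAB.
have [l3 [a3 b3]] := step l2 altO.
have hjs : forall m, f m <= f l3 by case; lra.
case: (pselect (K l3)) => hK; first by exists l3.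
have [j [hKj hj]] := h l3 hK.
by exists j; split => // m; exact: le_trans (hjs m) hj.
Qed.

Lemma ar1 (R : realType) n (beta : 'rV[R]_n) xs xt g j
  (hD : forall k, k <> j -> delta beta xs j - delta beta xt j <= delta beta xs k - delta beta xt k) a e :
  (exists j0, j0 = j /\ forall m, utility beta xs g a e m <= utility beta xs g a e j0) ->
  exists j0, j0 = j /\ forall m, utility beta xt g a e m <= utility beta xt g a e j0.
Proof.
move=> [_ [-> h]]; exists j; split => // m.
case: (pselect (m = j)) => [->//|/hD].
move: (h m); case: j {hD h}; case: m => //=; move=> *; lra.
Qed.

Lemma ar2 (R : realType) n (beta : 'rV[R]_n) xs xt g l (hl : l = altA \/ l = altB)
  (hD : delta beta xs l - delta beta xt l <= 0)
  (hor : (delta beta xs l - delta beta xt l) + Num.sg g * (delta beta xs (other l) - delta beta xt (other l)) <= 0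
         \/ `|g| <= - (delta beta xs l - delta beta xt l)) a e :
  (exists j, (j = l \/ j = altAB) /\ forall m, utility beta xs g a e m <= utility beta xs g a e j) ->
  exists j, (j = l \/ j = altAB) /\ forall m, utility beta xt g a e m <= utility beta xt g a e j.
Proof.
move=> [j [hj h]]; apply: pick_max => m hm.
have [h1|h1] := leP (utility beta xt g a e m) (utility beta xt g a e l).
  by exists l; split; [left|].
have [h2|h2] := leP (utility beta xt g a e m) (utility beta xt g a e altAB).
  by exists altAB; split; [right|].
exfalso; move: (h altA) (h altB) (h altAB) (h altO) h1 h2 hD hor.
have [g0|g0|g0] := ltgtP g 0;
  [rewrite ltr0_sg ?ltr0_norm // | rewrite gtr0_sg ?gtr0_norm // | rewrite g0 sgr0 normr0];
  case: hj => ->; case: hl => ->; case: m {hm} => /=; move=> ? ? ? ? ? ? ? [?|?]; lra.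
Qed.

Lemma ar3a (R : realType) n (beta : 'rV[R]_n) xs xt g
  (hneg : g <= - (delta beta xs altA - delta beta xt altA) \/
          g <= - (delta beta xs altB - delta beta xt altB) \/
          (delta beta xs altA - delta beta xt altA) + (delta beta xs altB - delta beta xt altB) <= 0) a e :
  (exists j, j = altAB /\ forall m, utility beta xs g a e m <= utility beta xs g a e j) ->
  exists j, j <> altO /\ forall m, utility beta xt g a e m <= utility beta xt g a e j.
Proof.
move=> [j [-> h]]; apply: pick_max => m hm.
have [h1|h1] := leP (utility beta xt g a e m) (utility beta xt g a e altA).
  by exists altA.
have [h2|h2] := leP (utility beta xt g a e m) (utility beta xt g a e altB).
  by exists altB.
have [h3|h3] := leP (utility beta xt g a e m) (utility beta xt g a e altAB).
  by exists altAB.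
exfalso; move: (h altA) (h altB) (h altAB) (h altO) h1 h2 h3 hneg.
case: m {hm} => /=; move=> ? ? ? ? ? ? ? [?|[?|?]]; lra.
Qed.

Lemma ar3b (R : realType) n (beta : 'rV[R]_n) xs xt g
  (hneg : (delta beta xs altA - delta beta xt altA) <= g \/
          - (delta beta xs altB - delta beta xt altB) <= g \/
          (delta beta xs altA - delta beta xt altA) - (delta beta xs altB - delta beta xt altB) <= 0) a e :
  (exists j, j = altA /\ forall m, utility beta xs g a e m <= utility beta xs g a e j) ->
  exists j, j <> altB /\ forall m, utility beta xt g a e m <= utility beta xt g a e j.
Proof.
move=> [j [-> h]]; apply: pick_max => m hm.
have [h1|h1] := leP (utility beta xt g a e m) (utility beta xt g a e altA).
  by exists altA.
have [h2|h2] := leP (utility beta xt g a e m) (utility beta xt g a e altAB).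
  by exists altAB.
have [h3|h3] := leP (utility beta xt g a e m) (utility beta xt g a e altO).
  by exists altO.
exfalso; move: (h altA) (h altB) (h altAB) (h altO) h1 h2 h3 hneg.
case: m {hm} => /=; move=> ? ? ? ? ? ? ? [?|[?|?]]; lra.
Qed.

Lemma fine_compl (R : realType) d (Omega : measurableType d) (P : probability Omega R)
  (Y : Omega -> alt) j (mA : measurable [set w | Y w = j]) :
  fine (P [set w | Y w <> j]) = 1 - fine (P [set w | Y w = j]).
Proof.
change [set w | Y w <> j] with (~` [set w | Y w = j]).
rewrite probability_setC //.
have h : (Probability.sort P [set w | Y w = j]) \is a fin_num := fin_num_measure P _ mA.
move: h; move: (Probability.sort P _) => x.
by case: x.
Qed.
Lemma aux (R : realDomainType) (x y : R) : x <= 1 - y -> 1 < x + y -> False.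
Proof. move=> *; lra. Qed.

Theorem proposition2
  (R : realType) (dx dz : nat) (T : nat) (hT : (2 <= T)%N) (s t : 'I_T) (hst : s != t)
  (beta0 : 'rV[R]_dx) (hbeta : beta0 != 0)
  (Gamma : 'rV[R]_dz -> R)
  (xs xt : 'rV[R]_dx * 'rV[R]_dx) (z : 'rV[R]_dz)
  (* probability space representing the conditional law given
     X_is = xs, X_it = xt, Z_i = z *)
  (d : measure_display) (Omega : measurableType d) (P : probability Omega R)
  (alpha : Omega -> R * R) (eps : 'I_T -> Omega -> R * R) (Y : 'I_T -> Omega -> alt)
  (malpha : measurable_fun setT alpha)
  (meps_s : measurable_fun setT (eps s)) (meps_t : measurable_fun setT (eps t))
  (mY : forall r j, measurable [set w | Y r w = j])
  (* utility maximization in periods s and t (Assumption 1: Gamma_it = Gamma(z)) *)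
  (hYs : forall w k, utility beta0 xs (Gamma z) (alpha w) (eps s w) k
                     <= utility beta0 xs (Gamma z) (alpha w) (eps s w) (Y s w))
  (hYt : forall w k, utility beta0 xt (Gamma z) (alpha w) (eps t w) k
                     <= utility beta0 xt (Gamma z) (alpha w) (eps t w) (Y t w))
  (* ties occur with probability zero *)
  (hties_s : P [set w | exists j k, j <> k /\
        (forall m, utility beta0 xs (Gamma z) (alpha w) (eps s w) m
                   <= utility beta0 xs (Gamma z) (alpha w) (eps s w) j) /\
        utility beta0 xs (Gamma z) (alpha w) (eps s w) k
        = utility beta0 xs (Gamma z) (alpha w) (eps s w) j] = 0%E)
  (hties_t : P [set w | exists j k, j <> k /\
        (forall m, utility beta0 xt (Gamma z) (alpha w) (eps t w) m
                   <= utility beta0 xt (Gamma z) (alpha w) (eps t w) j) /\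
        utility beta0 xt (Gamma z) (alpha w) (eps t w) k
        = utility beta0 xt (Gamma z) (alpha w) (eps t w) j] = 0%E)
  (* Assumption 3: eps_s and eps_t have the same conditional law given alpha
     (and the conditioning covariates) *)
  (hA3 : forall A : set ((R * R) * (R * R)), measurable A ->
      P ((fun w => (alpha w, eps s w)) @^-1` A)
      = P ((fun w => (alpha w, eps t w)) @^-1` A)) :
  let Ddelta := fun j => delta beta0 xs j - delta beta0 xt j in
  let Pr := fun (r : 'I_T) (K : alt -> Prop) => fine (P [set w | K (Y r w)]) in
  (* (1) *)
  (forall j : alt, Pr s (fun y => y = j) > Pr t (fun y => y = j) ->
     exists k : alt, k <> j /\ Ddelta j > Ddelta k) /\
  (* (2) *)
  (forall l : alt, (l = altA \/ l = altB) ->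
     Pr s (fun y => y = l \/ y = altAB) > Pr t (fun y => y = l \/ y = altAB) ->
     Ddelta l > 0 \/
     (Ddelta l + Num.sg (Gamma z) * Ddelta (other l) > 0 /\
      `|Gamma z| > - Ddelta l)) /\
  (* (3) *)
  (Pr s (fun y => y = altAB) + Pr t (fun y => y = altO) > 1 ->
     Gamma z > - Num.min (Ddelta altA) (Ddelta altB) /\
     Ddelta altA + Ddelta altB > 0) /\
  (Pr s (fun y => y = altA) + Pr t (fun y => y = altB) > 1 ->
     Gamma z < Num.min (Ddelta altA) (- Ddelta altB) /\
     Ddelta altA - Ddelta altB > 0).
Proof.
move=> Ddelta Pr.
have mps := measurable_fun_pair malpha meps_s.
have mpt := measurable_fun_pair malpha meps_t.
have KEY : forall K1 K2 : alt -> Prop,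
  (forall a e, (exists j, K1 j /\ forall m, utility beta0 xs (Gamma z) a e m <= utility beta0 xs (Gamma z) a e j) ->
     exists j, K2 j /\ forall m, utility beta0 xt (Gamma z) a e m <= utility beta0 xt (Gamma z) a e j) ->
  Pr s K1 <= Pr t K2.
  move=> K1 K2 himp; rewrite /Pr; apply: fine_le.
  - by apply: fin_num_measure; apply: mE; exact: mY.
  - by apply: fin_num_measure; apply: mE; exact: mY.
  exact: (@key R d Omega P alpha (eps s) (eps t) (Y s) (Y t)
     (fun a e j => utility beta0 xs (Gamma z) a e j) (fun a e j => utility beta0 xt (Gamma z) a e j)
     mps mpt (fun j => @mutil R dx beta0 xt (Gamma z) j) (mY s) (mY t) hYs hYt hties_t hA3 K1 K2 himp).
have compl : forall j, Pr t (fun y => y <> j) = 1 - Pr t (fun y => y = j).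
  by move=> j; rewrite /Pr; apply: fine_compl.
split.
{ move=> j hj.
  case: (pselect (exists k, k <> j /\ Ddelta j > Ddelta k)) => // hne; exfalso.
  have hD : forall k, k <> j -> Ddelta j <= Ddelta k.
    move=> k hk; rewrite leNgt; apply/negP => hlt; apply: hne; exists k; split => //.
  have H := KEY (fun y => y = j) (fun y => y = j) (fun a e => @ar1 _ _ _ _ _ _ _ hD a e).
  by move: (lt_le_trans hj H); rewrite ltxx. }
split.
{ move=> l hl hP.
  have [h0|h0] := ltP 0 (Ddelta l); first by left.
  have [h2|h2] := ltP 0 (Ddelta l + Num.sg (Gamma z) * Ddelta (other l));
  have [h3|h3] := ltP (- Ddelta l) `|Gamma z|; first by right.
  all: have hor : Ddelta l + Num.sg (Gamma z) * Ddelta (other l) <= 0 \/ `|Gamma z| <= - Ddelta l by [left|right].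
  all: have H := KEY (fun y => y = l \/ y = altAB) (fun y => y = l \/ y = altAB)
         (fun a e => @ar2 _ _ _ _ _ _ _ hl h0 hor a e).
  all: by move: (lt_le_trans hP H); rewrite ltxx. }
split.
{ move=> hP.
  have : (- Num.min (Ddelta altA) (Ddelta altB) < Gamma z /\ 0 < Ddelta altA + Ddelta altB) \/
         (Gamma z <= - Ddelta altA \/ Gamma z <= - Ddelta altB \/ Ddelta altA + Ddelta altB <= 0).
    have [h2|h2] := ltP 0 (Ddelta altA + Ddelta altB); last by right; right; right.
    have [h1|h1] := ltP (- Num.min (Ddelta altA) (Ddelta altB)) (Gamma z); first by left.
    right; case: (leP (Ddelta altA) (Ddelta altB)) => hm.
      by left; rewrite (min_l hm) in h1.
    by right; left; rewrite (min_r (ltW hm)) in h1.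
  case => // hneg; exfalso.
  have H := KEY (fun y => y = altAB) (fun y => y <> altO) (fun a e => @ar3a _ _ _ _ _ _ hneg a e).
  rewrite compl in H; exact: (@aux _ _ _ H hP). }
move=> hP.
have : (Gamma z < Num.min (Ddelta altA) (- Ddelta altB) /\ 0 < Ddelta altA - Ddelta altB) \/
       (Ddelta altA <= Gamma z \/ - Ddelta altB <= Gamma z \/ Ddelta altA - Ddelta altB <= 0).
  have [h2|h2] := ltP 0 (Ddelta altA - Ddelta altB); last by right; right; right.
  have [h1|h1] := ltP (Gamma z) (Num.min (Ddelta altA) (- Ddelta altB)); first by left.
  right; case: (leP (Ddelta altA) (- Ddelta altB)) => hm.
    by left; rewrite (min_l hm) in h1.
  by right; left; rewrite (min_r (ltW hm)) in h1.
case => // hneg; exfalso.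
have H := KEY (fun y => y = altA) (fun y => y <> altB) (fun a e => @ar3b _ _ _ _ _ _ hneg a e).
rewrite compl in H; exact: (@aux _ _ _ H hP).
Qed.
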